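(* Suppose that bounded operators $B(x):\mathbb C^2\to\mathcal K$, $C(x):\mathcal K\to\mathbb C^2$, $\mathbb X(x):\mathcal K\to\mathcal K$, differentiable in $x\in\mathbb R$, satisfy $\frac{\partial}{\partial x}B(x)=-(AB\sigma_2+B\gamma)\sigma_1^{-1}$, $\frac{\partial}{\partial x}C(x)u=\sigma_1^{-1}(-\sigma_2 C A_\zeta u+\gamma C u)$ for all $u\in D(A_\zeta)$, and $\frac{\partial}{\partial x}\mathbb X=B\sigma_2C$, and that $\mathbb X(x)(D(A_\zeta))\subseteq D(A)$ for all $x\in\mathbb R$. If the Lyapunov equation $A\mathbb X(x)u+\mathbb X(x)A_\zeta u+B(x)\sigma_1C(x)u=0$ (for all $u\in D(A)$) holds for a fixed $x_0$, then it holds for all $x$. In the case the operator $\mathbb X(x)$ is invertible and $B(x),C(x),\mathbb X(x)$ are part of an invertible node, if the equation $A_\zeta\mathbb X^{-1}(x)u'+\mathbb X^{-1}(x)Au'+\mathbb X^{-1}(x)B(x)\sigma_1C(x)\mathbb X^{-1}(x)u'=0$ (for all $u'\in D(A)$) holds for a fixed $x_0$, then it holds for all $x$.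
   Context: $\mathcal K$ is a Krein space; $A,A_\zeta$ are generators of $C_0$ groups on $\mathcal K$ with identical dense domain $D(A)=D(A_\zeta)$; $\sigma_1=\sigma_1^*$ is an invertible $2\times2$ matrix, $\sigma_2=\sigma_2^*$ and $\gamma=-\gamma^*$ are fixed $2\times2$ matrices; $B(x)\sigma_2$ is $A$-regular, i.e. $B(x)\sigma_2 e\in D(A)$ for all $e\in\mathbb C^2$. An invertible node means: $\mathbb X$ is invertible with $\mathbb X(D(A))\subseteq D(A)$ and $\mathbb X^{-1}(D(A))\subseteq D(A)$, and the Lyapunov equation $A\mathbb Xu+\mathbb XA_\zeta u+B\sigma_1Cu=0$ holds for $u\in D(A)$. *)

(* Defs.v *)
From HB Require Import structures.
From mathcomp Require Import all_boot all_order all_algebra.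
From mathcomp Require Import all_classical all_reals all_analysis.
From mathcomp Require Import complex.
Import Order.TTheory GRing.Theory Num.Theory.
Import numFieldNormedType.Exports.

Set Implicit Arguments.
Unset Strict Implicit.
Unset Printing Implicit Defensive.

Local Open Scope ring_scope.
Local Open Scope classical_set_scope.
Local Open Scope complex_scope.

(* Krein space structure on a complex Banach space K:
   ip is a hermitian sesquilinear (indefinite) inner product [.,.], and there is a
   fundamental symmetry J (bounded, linear, J^2 = I, ip-selfadjoint) such that
   [J.,.] is a positive definite inner product whose norm is equivalent to the
   norm of K (so K is complete for it). *)
Definition krein_space (R : realType) (K : completeNormedModType R[i])
    (ip : K -> K -> R[i]) : Prop :=
  (forall (a : R[i]) (u v w : K), ip (a *: u + v) w = a * ip u w + ip v w) /\
  (forall u v : K, ip u v = (ip v u)^*) /\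
  exists J : K -> K,
    [/\ linear J, continuous J,
        (forall u, J (J u) = u),
        (forall u v, ip (J u) v = ip u (J v)) &
        exists c1 c2 : R[i], [/\ 0 < c1, 0 < c2 &
          forall u, c1 * `|u| ^+ 2 <= ip (J u) u <= c2 * `|u| ^+ 2]].

Definition bounded_op (R : realType) (V W : normedModType R[i]) (T : V -> W) : Prop :=
  linear T /\ continuous T.

Definition C0_group (R : realType) (K : normedModType R[i]) (T : R -> K -> K) : Prop :=
  [/\ (forall t, bounded_op (T t)),
      (forall u, T 0 u = u),
      (forall s t u, T (s + t) u = T s (T t u)) &
      (forall u, continuous (fun t => T t u))].

Definition generator (R : realType) (K : normedModType R[i]) (T : R -> K -> K)
    (D : set K) (A : K -> K) : Prop :=
  forall u : K,
    (D u <-> exists v : K,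
        (fun h : R => (h%:C)^-1 *: (T h u - u)) @ 0^' --> v) /\
    (D u -> (fun h : R => (h%:C)^-1 *: (T h u - u)) @ 0^' --> A u).

Definition C0_group_generator (R : realType) (K : normedModType R[i])
    (D : set K) (A : K -> K) : Prop :=
  exists T : R -> K -> K, C0_group T /\ generator T D A.

Definition op_deriv (R : realType) (V W : normedModType R[i])
    (F : R -> V -> W) (F' : V -> W) (x : R) : Prop :=
  bounded_op F' /\
  forall eps : R[i], 0 < eps ->
    \forall h \near (0 : R)^',
      forall u : V, `|(h%:C)^-1 *: (F (x + h) u - F x u) - F' u| <= eps * `|u|.

Definition adjmx (R : realType) (M : 'M[R[i]]_2) : 'M[R[i]]_2 := map_mx conjc M^T.

(* Main.v *)
Require Import Defs.
From HB Require Import structures.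
From mathcomp Require Import all_boot all_order all_algebra.
From mathcomp Require Import all_classical all_reals all_analysis.
From mathcomp Require Import complex.
From mathcomp Require Import ring lra.
Import Order.TTheory GRing.Theory Num.Theory.
Import numFieldNormedType.Exports.
Local Open Scope ring_scope.
Local Open Scope classical_set_scope.
Local Open Scope complex_scope.

Section NR.
Context {R : realType}.
Definition nr {V : normedModType R[i]} (v : V) : R := complex.Re `|v|.
Definition nc (c : R[i]) : R := complex.Re `|c|.
Lemma ncE (c : R[i]) : `|c| = (nc c)%:C.
Proof. by rewrite /nc RRe_real // normr_real. Qed.
Lemma ncC (r : R) : nc (r%:C) = `|r|.
Proof. by apply: complexI; rewrite -ncE normc_def /= expr0n /= addr0 sqrtr_sqr. Qed.
Context {V : normedModType R[i]}.
Lemma nrE (v : V) : `|v| = (nr v)%:C.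
Proof. by rewrite /nr RRe_real // normr_real. Qed.
Lemma nr_ge0 (v : V) : 0 <= nr v.
Proof. by have := normr_ge0 v; rewrite nrE lecE /= => /andP[]. Qed.
Lemma nrD (u v : V) : nr (u + v) <= nr u + nr v.
Proof. by have := ler_normD u v; rewrite !nrE -rmorphD lecR. Qed.
Lemma nrZ (c : R[i]) (v : V) : nr (c *: v) = nc c * nr v.
Proof. by apply: complexI; have := normrZ c v; rewrite !nrE ncE -rmorphM. Qed.
Lemma nrZr (r : R) (v : V) : nr (r%:C *: v) = `|r| * nr v.
Proof. by rewrite nrZ ncC. Qed.
Lemma nr_eq0 (v : V) : nr v = 0 -> v = 0.
Proof. by move=> h; apply/normr0_eq0; rewrite nrE h. Qed.
Lemma nr0 : nr (0 : V) = 0.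
Proof. by rewrite /nr normr0. Qed.
Lemma nrN (v : V) : nr (- v) = nr v.
Proof. by rewrite /nr normrN. Qed.
Lemma nrB (u v : V) : nr (u - v) = nr (v - u).
Proof. by rewrite /nr distrC. Qed.
End NR.

Lemma posC (R : realType) (e : R[i]) : 0 < e -> e = (complex.Re e)%:C.
Proof. by case: e => a b; rewrite ltcE /= => /andP[/eqP -> _]. Qed.

Arguments posC {R e}.
Section Restr.
Variables (R : realType) (K : completeNormedModType R[i]).
Definition Kr : Type := K.
HB.instance Definition _ := GRing.Zmodule.copy Kr K.
Definition scr (r : R) (v : Kr) : Kr := (r%:C *: (v : K)).
Lemma scrA a b v : scr a (scr b v) = scr (a * b) v.
Proof. by rewrite /scr scalerA rmorphM. Qed.
Lemma scr1 : left_id 1 scr.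
Proof. by move=> v; rewrite /scr rmorph1 scale1r. Qed.
Lemma scrDr : right_distributive scr +%R.
Proof. by move=> a u v; rewrite /scr scalerDr. Qed.
Lemma scrDl v : {morph scr^~ v : a b / a + b}.
Proof. by move=> a b; rewrite /scr rmorphD scalerDl. Qed.
HB.instance Definition _ := GRing.Zmodule_isLmodule.Build R Kr scrA scr1 scrDr scrDl.

Definition nKr (v : Kr) : R := nr (v : K).
Lemma nKrD u v : nKr (u + v) <= nKr u + nKr v.
Proof. exact: (@nrD R K). Qed.
Lemma nKrZ (l : R) (x : Kr) : nKr (l *: x) = `|l| * nKr x.
Proof. by rewrite /nKr /GRing.scale /= /scr nrZr. Qed.
Lemma nKr_eq0 x : nKr x = 0 -> x = 0.
Proof. exact: (@nr_eq0 R K). Qed.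
HB.instance Definition _ := Lmodule_isNormed.Build R Kr nKrD nKrZ nKr_eq0.
Lemma nKrE (x : Kr) : `|x| = nr (x : K).
Proof. by []. Qed.
Lemma ballKr (x y : Kr) (e : R) : ball x e y <-> nr ((x : K) - y) < e.
Proof. by rewrite -ball_normE /ball_ /= nKrE. Qed.
Lemma ballK (x y : K) (e : R) : ball x e%:C y <-> nr (x - y) < e.
Proof. by rewrite -ball_normE /ball_ /= nrE ltcR. Qed.

Lemma Kr_complete (F : set_system Kr) : ProperFilter F -> cauchy F -> cvg F.
Proof.
move=> FF /cauchyP cF.
have FK : ProperFilter (F : set_system K) by [].
have cK : cauchy (F : set_system K).
  apply/cauchyP => e e0.
  have e'0 : 0 < complex.Re e by move: e0; rewrite ltcE /= => /andP[].
  have [x Fx] := cF _ e'0; exists x; apply: filterS Fx => y /ballKr.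
  rewrite -ball_normE /ball_ /= nrE.
  have -> : e = (complex.Re e)%:C by apply: posC.
  by rewrite ltcR.
have [l Fl] : exists l : K, (F : set_system K) --> l.
  by exists (lim (F : set_system K)); exact: cauchy_cvg.
apply/cvg_ex; exists (l : Kr) => A /nbhs_ballP [e /= e0 eA].
apply: (filterS eA); apply: (filterS (P := ball l e%:C)).
  by move=> y /ballK /ballKr.
by apply: Fl; apply: nbhsx_ballx; rewrite ltcR.
Qed.
HB.instance Definition _ := Uniform_isComplete.Build Kr Kr_complete.
End Restr.

Set Implicit Arguments.
Unset Strict Implicit.

Section Lin.
Variables (Rg : comNzRingType) (V W : lmodType Rg) (f : V -> W).
Hypothesis lf : linear f.
Lemma linD u v : f (u + v) = f u + f v.
Proof. by have := lf 1 u v; rewrite !scale1r. Qed.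
Lemma lin0 : f 0 = 0.
Proof. by have := linD 0 0; rewrite addr0 => /(congr1 (fun z => z - f 0)); rewrite subrr addrK. Qed.
Lemma linZ c u : f (c *: u) = c *: f u.
Proof. by have := lf c u 0; rewrite !addr0 lin0 addr0. Qed.
Lemma linN u : f (- u) = - f u.
Proof. by rewrite -scaleN1r linZ scaleN1r. Qed.
Lemma linB u v : f (u - v) = f u - f v.
Proof. by rewrite linD linN. Qed.
End Lin.

Lemma nr_dist (R : realType) (V : normedModType R[i]) (a b : V) :
  `|nr a - nr b| <= nr (a - b).
Proof.
have h1 := nrD (a - b) b; rewrite subrK in h1.
have h2 := nrD (b - a) a; rewrite subrK nrB in h2.
by rewrite ler_norml; apply/andP; split; lra.
Qed.

Lemma bounded_op_bound (R : realType) (V W : normedModType R[i]) (f : V -> W) :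
  bounded_op f -> exists c : R, 0 < c /\ forall x, nr (f x) <= c * nr x.
Proof.
case=> lf cf.
pose g : {linear V -> W} := HB.pack f (GRing.isLinear.Build _ _ _ _ f lf).
have : bounded_near g (nbhs 0) by apply/linear_bounded_continuous.
move=> /linear_boundedP /pinfty_ex_gt0 [r r0 Bf].
exists (complex.Re r); split; first by move: r0; rewrite ltcE /= => /andP[].
move=> x; have := Bf x; rewrite !nrE {1}(posC r0) -rmorphM lecR; exact.
Qed.

Lemma nr_cont (R : realType) (K : normedModType R[i]) (g : R -> K) :
  continuous g -> continuous (fun s => nr (g s)).
Proof.
move=> cg s0; apply/cvgrPdist_lt => e e0.
have := cg s0; move/cvgrPdist_lt => /(_ e%:C); rewrite ltcR => /(_ e0).
apply: filterS => t; rewrite nrE ltcR => h.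
exact: le_lt_trans (nr_dist (g s0) (g t)) h.
Qed.

Lemma T_unif_bound (R : realType) (K : completeNormedModType R[i]) (T : R -> K -> K) :
  C0_group T -> exists M : R, 0 < M /\
    forall s, 0 <= s <= 1 -> forall v, nr (T s v) <= M * nr v.
Proof.
case=> Tb T0 Tadd Tc.
pose F := [set f : Kr R K -> Kr R K | exists s, 0 <= s <= 1 /\ f = T s].
have H1 : forall f, F f -> bounded_fun_norm f /\ linear f.
  move=> f [s [_ ->]]; have [lf cf] := Tb s; split.
    move=> r; have [c [c0 hc]] := bounded_op_bound (Tb s).
    exists (c * r) => x; rewrite !nKrE => xr.
    by apply: le_trans (hc x) _; rewrite ler_wpM2l // ltW.
  by move=> a u v; rewrite /GRing.scale /= /scr; apply: lf.
have H2 : pointwise_bounded F.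
  move=> x.
  have cx : continuous (fun s => nr (T s (x : K))) by apply: nr_cont.
  have [c c01 hc] := @EVT_max R (fun s => nr (T s (x : K))) 0 1 ler01
    (continuous_subspaceT cx).
  exists (nr (T c (x : K))) => f [s [s01 ->]]; rewrite nKrE.
  by apply: hc; rewrite in_itv /=.
have [M HM] := Banach_Steinhauss H1 H2 1.
exists (Num.max M 1); split; first by rewrite lt_max ltr01 orbT.
move=> s s01 v.
have [->|v0] := eqVneq v 0.
  have [lf _] := Tb s.
  rewrite (lin0 lf).
  by rewrite nr0 mulr0.
have nv0 : 0 < nr v.
  by rewrite lt_neqAle nr_ge0 andbT eq_sym; apply/negP => /eqP /nr_eq0 /eqP; rewrite (negbTE v0).
pose w : Kr R K := (nr v)^-1 *: (v : Kr R K).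
have nw : `|w| = 1.
  by rewrite normrZ nKrE ger0_norm ?invr_ge0 ?nr_ge0 // mulVf // gt_eqF.
have := HM (T s) (ex_intro _ s (conj s01 erefl)) w; rewrite nw lexx => /(_ isT).
have [lf _] := Tb s.
have -> : (T s w : Kr R K) = (nr v)^-1 *: (T s v : Kr R K).
  by rewrite /w /GRing.scale /= /scr (linZ lf).
rewrite normrZ nKrE ger0_norm ?invr_ge0 ?nr_ge0 // => h.
have : nr (T s v) <= M * nr v by rewrite -ler_pdivrMr // mulrC.
move=> h2; apply: le_trans h2 _; apply: ler_wpM2r; first exact: nr_ge0.
by rewrite le_max lexx.
Qed.

Section Near.
Variable R : realType.
Lemma nbhs0_ex (P : R -> Prop) : (\forall x \near (0:R), P x) ->
  exists2 r : R, 0 < r & forall x, `|x| < r -> P x.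
Proof.
move=> /nbhs_ballP [r r0 H]; exists r => // x xr; apply: H.
by rewrite -ball_normE /ball_ /= sub0r normrN.
Qed.
Lemma dnbhs0_ex (P : R -> Prop) : (\forall x \near (0:R)^', P x) ->
  exists2 r : R, 0 < r & forall x, 0 < `|x| < r -> P x.
Proof.
move=> /nbhs0_ex [r r0 H]; exists r => // x /andP[x0 xr]; apply: H => //.
by rewrite -normr_gt0.
Qed.
Lemma cvg_nr (K : normedModType R[i]) T (F : set_system T) {FF : Filter F}
  (f : T -> K) l : f @ F --> l -> forall e : R, 0 < e -> \forall t \near F, nr (l - f t) < e.
Proof.
move=> /cvgrPdist_lt H e e0; have := H e%:C; rewrite ltcR => /(_ e0).
by apply: filterS => t; rewrite nrE ltcR.
Qed.
Lemma nr_cvg (K : normedModType R[i]) T (F : set_system T) {FF : Filter F}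
  (f : T -> K) l : (forall e : R, 0 < e -> \forall t \near F, nr (l - f t) < e) -> f @ F --> l.
Proof.
move=> H; apply/cvgrPdist_lt => e e0; rewrite (posC e0).
have e'0 : 0 < complex.Re e by move: e0; rewrite ltcE /= => /andP[].
by apply: filterS (H _ e'0) => t; rewrite nrE ltcR.
Qed.
End Near.

Section Gen.
Variables (R : realType) (K : completeNormedModType R[i]) (T : R -> K -> K)
  (D : set K) (A : K -> K).
Hypotheses (CT : C0_group T) (GT : generator T D A).

Definition dq u (h : R) := (h%:C)^-1 *: (T h u - u).

Lemma dq_lin a u v h : dq (a *: u + v) h = a *: dq u h + dq v h.
Proof.
have [Tb _ _ _] := CT; have [lf _] := Tb h.
rewrite /dq (linD lf) (linZ lf) opprD addrACA -scalerBr scalerDr !scalerA mulrC.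
by [].
Qed.

Lemma genL a u v : D u -> D v -> D (a *: u + v) /\ A (a *: u + v) = a *: A u + A v.
Proof.
move=> Du Dv.
have Lu := (GT u).2 Du; have Lv := (GT v).2 Dv.
have L : dq (a *: u + v) @ (0:R)^' --> a *: A u + A v.
  rewrite (_ : dq (a *: u + v) = (fun h => a *: dq u h + dq v h)); last first.
    by apply: funext => h; rewrite dq_lin.
  by apply: cvgD; [apply: cvgZr|]; [exact: Lu| exact: Lv].
have Dw : D (a *: u + v) by apply/(GT _).1; exists (a *: A u + A v).
split => //; have Lw := (GT _).2 Dw.
exact: (cvg_unique _ Lw L).
Qed.

Lemma nr_sum_bound (F : nat -> K) N c :
  (forall k, (k < N)%N -> nr (F k) <= c) -> nr (\sum_(0 <= k < N) F k) <= N%:R * c.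
Proof.
elim: N => [|N IH] H; first by rewrite big_geq // nr0 mul0r.
rewrite big_nat_recr //= (le_trans (nrD _ _)) // -natr1 mulrDl mul1r.
by rewrite lerD ?H // IH // => k kN; apply: H; rewrite ltnS ltnW.
Qed.

Lemma gen_closed (y : K) :
  (forall e : R, 0 < e -> exists z, D z /\ nr z < e /\ nr (A z - y) < e) -> y = 0.
Proof.
move=> Hap.
have [Tb T0 Tadd Tc] := CT.
have [M [M0 HM]] := T_unif_bound CT.
suff Hle : forall eps, 0 < eps -> nr y <= eps.
  apply: nr_eq0; have ny0 := nr_ge0 y.
  case: (eqVneq (nr y) 0) => [//|ne].
  have yp : 0 < nr y by rewrite lt_neqAle eq_sym ne.
  have y2 : 0 < nr y / 2 by lra.
  have := Hle _ y2; lra.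
move=> eps eps0.
have Cy : (fun s => T s y) @ (0:R) --> y.
  by have := Tc y 0; rewrite /continuous_at /= T0.
have eps30 : 0 < eps / 3 by rewrite divr_gt0.
have [rho rho0 Hrho] := nbhs0_ex (cvg_nr Cy eps30).
pose h := Num.min (rho / 2) 1.
have h0 : 0 < h by rewrite lt_min ltr01 andbT divr_gt0.
have h1 : h <= 1 by rewrite ge_min lexx orbT.
have hrho : h < rho.
  have : h <= rho / 2 by rewrite ge_min lexx.
  lra.
pose e := h * eps / (3 * (2 * M + 1)).
have e0 : 0 < e by rewrite /e divr_gt0 ?mulr_gt0 // ?addr_gt0 ?mulr_gt0.
have [z [Dz [nz nAz]]] := Hap e e0.
have Lz := (GT z).2 Dz.
pose eta := eps / (3 * M).
have eta0 : 0 < eta by rewrite divr_gt0 ?mulr_gt0.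
have [r2 r20 Hr2] := dnbhs0_ex (cvg_nr Lz eta0).
pose N := (Num.truncn (h / r2)).+1.
have N0 : (0 < N%:R :> R) by rewrite ltr0n.
pose d := h / N%:R.
have d0 : 0 < d by rewrite divr_gt0.
have dr2 : d < r2.
  rewrite /d ltr_pdivrMr // mulrC -ltr_pdivrMr //.
  exact: truncnS_gt.
have Nd : N%:R * d = h by rewrite /d mulrC divfK // gt_eqF.
have kd : forall k, (k < N)%N -> 0 <= k%:R * d <= h.
  move=> k kN; have kN' : k%:R <= N%:R :> R by rewrite ler_nat ltnW.
  rewrite mulr_ge0 ?ler0n ?ltW //= -Nd; by rewrite ltr_pM2r // ltr_nat.
have Hw := Hr2 d; rewrite gtr0_norm // d0 dr2 /= in Hw; have {}Hw := Hw isT.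
set w := _ - _ in Hw.
have lin : forall s, linear (T s) by move=> s; case: (Tb s).
have dC0 : d%:C != 0.
  by apply/eqP => /(congr1 (@complex.Re R)) /= d00; move: d0; rewrite d00 ltxx.
have Tdz : T d z - z = d%:C *: (A z - w).
  have -> : A z - w = (d%:C)^-1 *: (T d z - z) by rewrite /w opprB addrCA subrr addr0.
  by rewrite scalerA mulfV // scale1r.
clearbody w.
have tele : T h z - z = \sum_(0 <= k < N) T (k%:R * d) (T d z - z).
  rewrite -Nd.
  have := telescope_sumr (fun k => T (k%:R * d) z) (leq0n N).
  rewrite mul0r T0 => <-; apply: eq_bigr => k _.
  by rewrite (linB (lin _)) -Tadd -natr1 mulrDl mul1r.
pose S v := \sum_(0 <= k < N) T (k%:R * d) v.
have SB : forall u v, S (u - v) = S u - S v.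
  by move=> u v; rewrite /S -sumrB; apply: eq_bigr => k _; rewrite (linB (lin _)).
have SZ : forall c v, S (c *: v) = c *: S v.
  by move=> c v; rewrite /S scaler_sumr; apply: eq_bigr => k _; rewrite (linZ (lin _)).
pose Y := \sum_(0 <= k < N) (T (k%:R * d) y - y).
have Eq : h%:C *: y = (T h z - z) - d%:C *: S (A z - y) + d%:C *: S w - d%:C *: Y.
  rewrite tele -/(S _) Tdz SZ -scalerBr -scalerDr -scalerBr.
  rewrite !SB /Y sumrB /S.
  set a := \sum_(0 <= k < N) T (k%:R * d) (A z).
  set b := \sum_(0 <= k < N) T (k%:R * d) w.
  set c := \sum_(0 <= k < N) T (k%:R * d) y.
  rewrite sumr_const_nat subn0.
  have E1 : a - b - (a - c) = c - b by rewrite opprB addrC addrA subrK.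
  have E2 : a - b - (a - c) + b - (c - y *+ N) = y *+ N.
    by rewrite E1 subrK opprB addrC subrK.
  rewrite E2 -scaler_nat scalerA -Nd rmorphM rmorph_nat mulrC.
  by [].
have h01 : 0 <= h <= 1 by rewrite (ltW h0) h1.
have kd1 : forall k, (k < N)%N -> 0 <= k%:R * d <= 1.
  move=> k kN; have /andP[a1 a2] := kd k kN; rewrite a1 /=; exact: le_trans a2 h1.
have nX1 : nr (T h z - z) <= M * nr z + nr z.
  by rewrite (le_trans (nrD _ _)) // nrN lerD2r HM.
have nS : forall v, nr (d%:C *: S v) <= h * (M * nr v).
  move=> v; rewrite nrZr gtr0_norm //.
  have hS : nr (S v) <= N%:R * (M * nr v).
    by apply: nr_sum_bound => k kN; apply: HM; apply: kd1.
  have := ler_wpM2l (ltW d0) hS.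
  have -> : d * (N%:R * (M * nr v)) = h * (M * nr v) by rewrite -Nd; ring.
  exact.
have nY : nr (d%:C *: Y) <= h * (eps / 3).
  rewrite nrZr gtr0_norm //.
  have hS : nr Y <= N%:R * (eps / 3).
    apply: nr_sum_bound => k kN; rewrite nrB; apply: ltW; apply: Hrho.
    have /andP[a1 a2] := kd k kN; rewrite ger0_norm //; exact: le_lt_trans a2 hrho.
  have := ler_wpM2l (ltW d0) hS.
  have -> : d * (N%:R * (eps / 3)) = h * (eps / 3) by rewrite -Nd; ring.
  exact.
have nrBl : forall u v : K, nr (u - v) <= nr u + nr v.
  by move=> u v; rewrite (le_trans (nrD _ _)) // nrN.
have Hny : h * nr y <= (M * nr z + nr z) + h * (M * nr (A z - y)) + h * (M * nr w)
    + h * (eps / 3).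
  have := congr1 nr Eq; rewrite nrZr gtr0_norm // => ->.
  apply: le_trans (nrBl _ _) _; apply: lerD; last exact: nY.
  apply: le_trans (nrD _ _) _; apply: lerD; last exact: nS.
  apply: le_trans (nrBl _ _) _; apply: lerD => //; exact: nS.
have f1 : M * nr z <= M * e by rewrite ler_pM2l // ltW.
have f2 : h * (M * nr (A z - y)) <= h * (M * e) by rewrite ler_pM2l // ler_pM2l // ltW.
have f3 : h * (M * nr w) <= h * (M * eta) by rewrite ler_pM2l // ler_pM2l // ltW.
have f4 : M * eta = eps / 3 by rewrite /eta; field; rewrite gt_eqF.
have f5 : h * (M * e) <= M * e.
  by rewrite mulrC ler_piMr // mulr_ge0 ?ltW.
have f6 : (2 * M + 1) * e = h * eps / 3.
  by rewrite /e; field; rewrite gt_eqF // addr_gt0 ?mulr_gt0.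
have : h * nr y <= h * eps.
  rewrite f4 in f3; lra.
by rewrite ler_pM2l.
Qed.
End Gen.

Definition vderiv (R : realType) (K : normedModType R[i]) (f : R -> K) (f' : K) (t : R) :=
  forall e : R, 0 < e -> \forall h \near (0:R)^', nr ((h%:C)^-1 *: (f (t + h) - f t) - f') <= e.

Lemma idA (V : zmodType) (a b c d : V) : a - (c + d) = (b - d) + (a - b - c).
Proof. by rewrite [RHS]addrC -!addrA opprD (addrCA (- b)) addKr. Qed.
Lemma idB (V : zmodType) (a b c d : V) : b - (- c + d) = (a - d) - (a - b - c).
Proof. by rewrite opprD opprK !opprB [RHS]addrC -!addrA addKr addrCA. Qed.

Section Dist.
Variables (R : realType) (K : completeNormedModType R[i]) (T : R -> K -> K)
  (D : set K) (A : K -> K).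
Hypotheses (CT : C0_group T) (GT : generator T D A).
Variables (f g f' g' : R -> K).
Hypotheses (Df : forall t, D (f t)) (Df' : forall t, D (f' t))
  (Ag : forall t, A (f' t) = g' t)
  (df : forall t, vderiv f (f' t) t) (dg : forall t, vderiv g (g' t) t).

Definition Es t := [set r | exists w, D w /\ r = nr (f t - w) + nr (g t - A w)].
Definition phi t := inf (Es t).

Lemma Es_lb t : has_lbound (Es t).
Proof. by exists 0 => r [w [_ ->]]; rewrite addr_ge0 ?nr_ge0. Qed.
Lemma Es_ne t : Es t !=set0.
Proof. by exists (nr (f t - f t) + nr (g t - A (f t))); exists (f t). Qed.
Lemma phi_le t w : D w -> phi t <= nr (f t - w) + nr (g t - A w).
Proof. by move=> Dw; apply: ge_inf; [exact: Es_lb | exists w]. Qed.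
Lemma phi_ge0 t : 0 <= phi t.
Proof. by apply: lb_le_inf; [exact: Es_ne| move=> r [w [_ ->]]; rewrite addr_ge0 ?nr_ge0]. Qed.

Definition err t h := nr (f (t + h) - f t - h%:C *: f' t) + nr (g (t + h) - g t - h%:C *: g' t).

Lemma phi_step t s E : (forall w, D w -> exists w', D w' /\
     nr (f s - w') + nr (g s - A w') <= nr (f t - w) + nr (g t - A w) + E) ->
  phi s <= phi t + E.
Proof.
move=> H; rewrite -lerBlDr; apply: lb_le_inf; first exact: Es_ne.
move=> r [w [Dw ->]]; rewrite lerBlDr.
have [w' [Dw' hw']] := H w Dw; exact: le_trans (phi_le s Dw') hw'.
Qed.


Lemma phi_lip t h : `|phi (t + h) - phi t| <= err t h.
Proof.
rewrite ler_norml; apply/andP; split; last first.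
  rewrite lerBlDl; apply: phi_step => w Dw.
  have [Dw' Aw'] := genL CT GT (h%:C) (Df' t) Dw.
  exists (h%:C *: f' t + w); split => //; rewrite Aw' Ag.
  have e1 : f (t + h) - (h%:C *: f' t + w) = (f t - w) + (f (t + h) - f t - h%:C *: f' t).
    exact: idA.
  have e2 : g (t + h) - (h%:C *: g' t + A w) = (g t - A w) + (g (t + h) - g t - h%:C *: g' t).
    exact: idA.
  rewrite e1 e2 /err; apply: le_trans (lerD (nrD _ _) (nrD _ _)) _.
  by rewrite addrACA.
rewrite lerNl opprB lerBlDl; apply: phi_step => w Dw.
have [Dw' Aw'] := genL CT GT (- h%:C) (Df' t) Dw.
exists (- h%:C *: f' t + w); split => //; rewrite Aw' Ag.
have e1 : f t - (- h%:C *: f' t + w) = (f (t + h) - w) - (f (t + h) - f t - h%:C *: f' t).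
  by rewrite scaleNr; exact: idB.
have e2 : g t - (- h%:C *: g' t + A w) = (g (t + h) - A w) - (g (t + h) - g t - h%:C *: g' t).
  by rewrite scaleNr; exact: idB.
rewrite e1 e2 /err.
have nB : forall u v : K, nr (u - v) <= nr u + nr v by move=> u v; rewrite (le_trans (nrD _ _)) // nrN.
by apply: le_trans (lerD (nB _ _) (nB _ _)) _; rewrite addrACA.
Qed.

Lemma err_small t e : 0 < e -> \forall h \near (0:R)^', err t h <= e * `|h|.
Proof.
move=> e0; have e2 : 0 < e / 2 by rewrite divr_gt0.
have Hf := df t e2; have Hg := dg t e2.
near=> h.
have h0 : h != 0 by near: h; exact: nbhs_dnbhs_neq.
have hC0 : h%:C != 0.
  by apply/eqP => /(congr1 (@complex.Re R)) /= h00; move: h0; rewrite h00 eqxx.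
have idf : forall (F : R -> K) (v : K), F (t + h) - F t - h%:C *: v =
    h%:C *: ((h%:C)^-1 *: (F (t + h) - F t) - v).
  by move=> F v; rewrite scalerBr scalerA mulfV // scale1r.
rewrite /err !idf !nrZr.
have a1 : nr ((h%:C)^-1 *: (f (t + h) - f t) - f' t) <= e / 2 by near: h.
have a2 : nr ((h%:C)^-1 *: (g (t + h) - g t) - g' t) <= e / 2 by near: h.
have hp : 0 <= `|h| by [].
have := lerD (ler_wpM2l hp a1) (ler_wpM2l hp a2).
  rewrite -!mulrDr => H; apply: le_trans H _.
  have -> : e * (2^-1 + 2^-1) = e by field.
  by rewrite mulrC.
Unshelve. all: by end_near. Qed.

Lemma phi_is_derive (t : R) : is_derive t (1:R) phi 0.
Proof.
have L : (fun h : R => h^-1 *: ((phi \o shift t) (h *: (1:R)) - phi t)) @ (0:R)^' --> (0:R).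
  apply/cvgrPdist_lt => e e0.
  have e2 : 0 < e / 2 by rewrite divr_gt0.
  have Hs := err_small t e2.
  near=> h.
  have h0 : h != 0 by near: h; exact: nbhs_dnbhs_neq.
  have a1 : err t h <= e / 2 * `|h| by near: h.
  rewrite /= sub0r normrN [h *: 1]mulr1 addrC /GRing.scale /= normrM normfV.
  have := phi_lip t h => a2.
  have hp : 0 < `|h| by rewrite normr_gt0.
  rewrite mulrC ltr_pdivrMr //.
  rewrite (addrC (- phi t)) (addrC h); apply: le_lt_trans a2 _; apply: le_lt_trans a1 _.
  by rewrite ltr_pM2r //; lra.
apply: DeriveDef; first by apply/cvg_ex; exists 0.
by rewrite /derive; exact: cvg_lim.
Unshelve. all: by end_near. Qed.

Lemma phi_const a b : phi a = phi b.
Proof.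
wlog ab : a b / a <= b.
  move=> H; case: (lerP a b) => [/H //|/ltW /H ->] //.
case: (eqVneq a b) => [-> //|ne].
have ltab : a < b by rewrite lt_neqAle ne.
have [c _ hc] := @MVT R phi (fun _ => 0) a b ltab (fun x _ => phi_is_derive x)
  (derivable_within_continuous (fun x _ => @ex_derive _ _ _ _ _ _ _ (phi_is_derive x))).
by move: hc; rewrite mul0r => /eqP; rewrite subr_eq0 => /eqP.
Qed.

Lemma graph_transport x0 x : A (f x0) = g x0 -> A (f x) = g x.
Proof.
move=> H0.
have p0 : phi x0 = 0.
  apply/eqP; rewrite eq_le phi_ge0 andbT.
  by have := phi_le x0 (Df x0); rewrite subrr H0 subrr nr0 addr0.
have px : phi x = 0 by rewrite -(phi_const x0 x).
apply/eqP; rewrite eq_sym -subr_eq0; apply/eqP.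
apply: (gen_closed CT GT) => e e0.
have [r [w [Dw ->]] hr] : exists2 r, Es x r & r < e.
  by apply: inf_lt; [exact: Es_ne | rewrite /phi in px; rewrite px].
have [Dz Az] := genL CT GT (-1) (Df x) Dw.
exists ((-1) *: f x + w); split => //.
have n1 := nr_ge0 (f x - w); have n2 := nr_ge0 (g x - A w).
rewrite Az !scaleN1r; split.
  by rewrite addrC nrB; lra.
have -> : - A (f x) + A w - (g x - A (f x)) = - (g x - A w).
  by rewrite !opprB addrAC addKr addrC.
by rewrite nrN; lra.
Qed.
End Dist.

Lemma idP4 (Rg : comNzRingType) (W : lmodType Rg) (q : Rg) (P Q Rr a1 a0 b : W) :
  q *: (P - Rr) - (a0 + b) = (q *: (P - Q) - a1) + (a1 - a0) + (q *: (Q - Rr) - b).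
Proof. by rewrite subrKA addrACA -scalerDr subrKA opprD. Qed.
Lemma idG (W : zmodType) (p a q : W) : - (p + (- (a + q) + (- p + q))) = a.
Proof. by rewrite addrCA addNKr opprD opprK addrK. Qed.

Lemma idN (Rg : comNzRingType) (W : lmodType Rg) (q : Rg) (x y a : W) :
  q *: (- x - - y) - - a = - (q *: (x - y) - a).
Proof. by rewrite -opprD scalerN opprB opprK addrC. Qed.

Section VDeriv.
Variable R : realType.

Lemma vderiv_op (V W : normedModType R[i]) (F : R -> V -> W) F' t v :
  op_deriv F F' t -> vderiv (fun s => F s v) (F' v) t.
Proof.
case=> _ H e e0.
have a0 : 0 < nr v + 1 by have := nr_ge0 v; lra.
pose eps := e / (nr v + 1).
have eps0 : 0 < eps by rewrite divr_gt0.
have := H eps%:C; rewrite ltcR => /(_ eps0).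
apply: filterS => h /(_ v); rewrite !nrE -rmorphM lecR => H1.
apply: le_trans H1 _; rewrite /eps mulrAC ler_pdivrMr //.
by rewrite ler_pM2l //; lra.
Qed.

Lemma vderivD (V : normedModType R[i]) (f g : R -> V) a b t :
  vderiv f a t -> vderiv g b t -> vderiv (fun s => f s + g s) (a + b) t.
Proof.
move=> df dg e e0; have e2 : 0 < e / 2 by rewrite divr_gt0.
have Hf := df _ e2; have Hg := dg _ e2.
near=> h.
have -> : (h%:C)^-1 *: (f (t + h) + g (t + h) - (f t + g t)) - (a + b) =
   ((h%:C)^-1 *: (f (t + h) - f t) - a) + ((h%:C)^-1 *: (g (t + h) - g t) - b).
  by rewrite opprD addrACA scalerDr addrACA opprD.
apply: le_trans (nrD _ _) _.
have a1 : nr ((h%:C)^-1 *: (f (t + h) - f t) - a) <= e / 2 by near: h.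
have a2 : nr ((h%:C)^-1 *: (g (t + h) - g t) - b) <= e / 2 by near: h.
lra.
Unshelve. all: by end_near. Qed.

Lemma vderivN (V : normedModType R[i]) (f : R -> V) a t :
  vderiv f a t -> vderiv (fun s => - f s) (- a) t.
Proof.
move=> df e e0; apply: filterS (df _ e0) => h.
by rewrite idN nrN.
Qed.

Lemma vderiv_prod (V W : normedModType R[i]) (F : R -> V -> W) (F' : V -> W)
  (c : R -> V) (c' : V) t :
  op_deriv F F' t -> bounded_op (F t) -> vderiv c c' t ->
  vderiv (fun s => F s (c s)) (F' (c t) + F t c') t.
Proof.
move=> [bF' HF] bFt dc e e0.
have [M1 [M10 HM1]] := bounded_op_bound bF'.
have [M2 [M20 HM2]] := bounded_op_bound bFt.
have lF' := bF'.1; have lFt := bFt.1.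
have c'0 := nr_ge0 c'; have ct0 := nr_ge0 (c t).
pose a := nr (c t) + nr c' + 1.
have a0 : 0 < a by rewrite /a; lra.
have e30 : 0 < e / 3 by rewrite divr_gt0.
have ea0 : 0 < e / 3 / a by rewrite divr_gt0.
have H1 := HF (e / 3 / a)%:C; rewrite ltcR in H1; have {}H1 := H1 ea0.
have m20 : 0 < Num.min 1 (e / 3 / M2) by rewrite lt_min ltr01 divr_gt0.
have H2 := dc _ m20.
have m10 : 0 < Num.min 1 (e / 3 / (M1 * (nr c' + 1))).
  by rewrite lt_min ltr01 divr_gt0 // mulr_gt0 //; lra.
have H3 := @dnbhs0_lt R R _ m10.
near=> h.
have h0 : h != 0 by near: h; exact: nbhs_dnbhs_neq.
have hC0 : h%:C != 0.
  by apply/eqP => /(congr1 (@complex.Re R)) /= h00; move: h0; rewrite h00 eqxx.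
have b1 : forall u, nr ((h%:C)^-1 *: (F (t + h) u - F t u) - F' u) <= e / 3 / a * nr u.
  have b1c : forall u, `|(h%:C)^-1 *: (F (t + h) u - F t u) - F' u| <= (e / 3 / a)%:C * `|u|.
    by near: h; exact: H1.
  by move=> u; have := b1c u; rewrite !nrE -rmorphM lecR.
have b2 : nr ((h%:C)^-1 *: (c (t + h) - c t) - c') <= Num.min 1 (e / 3 / M2) by near: h.
have b3 : `|h| < Num.min 1 (e / 3 / (M1 * (nr c' + 1))) by near: h.
move: b2 b3; rewrite !lt_min !le_min => /andP[b2 b2'] /andP[b3 b3'].
set dc1 := c (t + h) - c t.
have edc : dc1 = h%:C *: ((h%:C)^-1 *: dc1 - c') + h%:C *: c'.
  by rewrite -scalerDr subrK scalerA mulfV // scale1r.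
have ndc : nr dc1 <= `|h| * (nr c' + 1).
  rewrite edc; apply: le_trans (nrD _ _) _; rewrite !nrZr.
  have := ler_wpM2l (normr_ge0 h) b2; lra.
have nct : nr (c (t + h)) <= a.
  have -> : c (t + h) = c t + dc1 by rewrite /dc1 addrCA subrr addr0.
  apply: le_trans (nrD _ _) _; rewrite /a.
  have : `|h| * (nr c' + 1) <= nr c' + 1 by rewrite ler_piMl //; [lra|exact: ltW].
  lra.
rewrite (idP4 _ _ (F t (c (t + h))) _ (F' (c (t + h)))).
rewrite -(linB lF') -(linB lFt) -(linZ lFt) -(linB lFt).
apply: le_trans (nrD _ _) _; apply: le_trans (lerD (nrD _ _) (lexx _)) _.
have t1 := b1 (c (t + h)).
have t1' : e / 3 / a * nr (c (t + h)) <= e / 3.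
  rewrite mulrAC ler_pdivrMr // ler_pM2l //.
have t2 : nr (F' dc1) <= e / 3.
  apply: le_trans (HM1 _) _.
  have := ler_wpM2l (ltW M10) ndc.
  have : `|h| * (M1 * (nr c' + 1)) <= e / 3.
    by rewrite -ler_pdivlMr ?mulr_gt0 //; [exact: ltW|lra].
  move=> u1 u2; apply: le_trans u2 _; rewrite mulrCA; exact: u1.
have t3 : nr (F t ((h%:C)^-1 *: dc1 - c')) <= e / 3.
  apply: le_trans (HM2 _) _; rewrite mulrC -ler_pdivlMr //.
have : e / 3 + e / 3 + e / 3 = e by field.
lra.
Unshelve. all: by end_near. Qed.
End VDeriv.

Section MxBound.
Variable R : realType.

Lemma nr_sumI (V : normedModType R[i]) (I : finType) (F : I -> V) :
  nr (\sum_i F i) <= \sum_i nr (F i).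
Proof.
elim/big_ind2 : _ => [|a b c d h1 h2|i _]; first by rewrite nr0.
  by apply: le_trans (nrD _ _) _; apply: lerD.
by [].
Qed.

Lemma mx_entry_le m n (x : 'M[R[i]]_(m, n)) i j : nc (x i j) <= nr x.
Proof.
rewrite -lecR -ncE -nrE.
rewrite [X in _ <= X]/Num.norm /= mx_normE.
rewrite -[leLHS]nngE num_le.
exact: (le_bigmax _ _ (i, j)).
Qed.

Lemma mx_bound (s : 'M[R[i]]_2) : exists K : R, 0 < K /\
  forall v : 'cV[R[i]]_2, nr (s *m v) <= K * nr v.
Proof.
pose S := \sum_(i < 2) \sum_(j < 1) nr (s *m delta_mx i j).
have S0 : 0 <= S by apply: sumr_ge0 => i _; apply: sumr_ge0 => j _; exact: nr_ge0.
exists (S + 1); split; first by lra.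
move=> v.
have -> : s *m v = \sum_(i < 2) \sum_(j < 1) v i j *: (s *m delta_mx i j).
  rewrite {1}(matrix_sum_delta v) mulmx_sumr; apply: eq_bigr => i _.
  by rewrite mulmx_sumr; apply: eq_bigr => j _; rewrite scalemxAr.
apply: le_trans (nr_sumI _) _.
apply: (@le_trans _ _ (\sum_(i < 2) \sum_(j < 1) nr v * nr (s *m delta_mx i j))).
  apply: ler_sum => i _; apply: le_trans (nr_sumI _) _; apply: ler_sum => j _.
  rewrite nrZ; apply: ler_wpM2r; [exact: nr_ge0 | exact: mx_entry_le].
have -> : \sum_(i < 2) \sum_(j < 1) nr v * nr (s *m delta_mx i j) = nr v * S.
  by rewrite /S mulr_sumr; apply: eq_bigr => i _; rewrite mulr_sumr.
have := nr_ge0 v; nra.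
Qed.
End MxBound.

Lemma vderiv_mx (R : realType) (s : 'M[R[i]]_2) (c : R -> 'cV[R[i]]_2) c' t :
  vderiv c c' t -> vderiv (fun x => s *m c x) (s *m c') t.
Proof.
move=> dc e e0; have [K [K0 HK]] := mx_bound s.
have eK : 0 < e / K by rewrite divr_gt0.
apply: filterS (dc _ eK) => h H.
rewrite -mulmxBr scalemxAr -mulmxBr.
apply: le_trans (HK _) _.
by rewrite mulrC -ler_pdivlMr.
Qed.

Unset Implicit Arguments.
Set Strict Implicit.

Theorem mainTheorem4 (R : realType) (K : completeNormedModType R[i])
  (ip : K -> K -> R[i]) (D : set K) (A Az : K -> K)
  (sigma1 sigma2 gamma : 'M[R[i]]_2)
  (B : R -> 'cV[R[i]]_2 -> K) (C : R -> K -> 'cV[R[i]]_2) (X : R -> K -> K) :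
  krein_space ip ->
  (* A and A_zeta generate C_0 groups, with the same dense domain D *)
  C0_group_generator D A -> C0_group_generator D Az -> dense D ->
  (* the 2x2 matrices *)
  sigma1 = adjmx sigma1 -> sigma1 \in unitmx ->
  sigma2 = adjmx sigma2 -> gamma = - adjmx gamma ->
  (* B, C, X are families of bounded operators *)
  (forall x, bounded_op (B x)) -> (forall x, bounded_op (C x)) ->
  (forall x, bounded_op (X x)) ->
  (* B(x) sigma2 is A-regular *)
  (forall x e, D (B x (sigma2 *m e))) ->
  (* d/dx B = -(A B sigma2 + B gamma) sigma1^-1 *)
  (forall x, op_deriv B (fun e => - (A (B x (sigma2 *m (invmx sigma1 *m e)))
                                      + B x (gamma *m (invmx sigma1 *m e)))) x) ->
  (* C is differentiable, with d/dx C u = sigma1^-1 (- sigma2 C Az u + gamma C u) on D *)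
  (forall x, exists C' : K -> 'cV[R[i]]_2, op_deriv C C' x /\
     forall u, D u -> C' u = invmx sigma1 *m (- (sigma2 *m C x (Az u)) + gamma *m C x u)) ->
  (* d/dx X = B sigma2 C *)
  (forall x, op_deriv X (fun u => B x (sigma2 *m C x u)) x) ->
  (* X(x) maps D(A_zeta) into D(A) *)
  (forall x u, D u -> D (X x u)) ->
  (forall x0 : R,
     (forall u, D u -> A (X x0 u) + X x0 (Az u) + B x0 (sigma1 *m C x0 u) = 0) ->
     forall x : R,
     (forall u, D u -> A (X x u) + X x (Az u) + B x (sigma1 *m C x u) = 0)) /\
  (forall Xinv : R -> K -> K,
     (forall x, continuous (Xinv x)) ->
     (forall x u, X x (Xinv x u) = u) -> (forall x u, Xinv x (X x u) = u) ->
     (forall x u, D u -> D (Xinv x u)) ->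
     forall x0 : R,
     (forall u', D u' -> Az (Xinv x0 u') + Xinv x0 (A u')
                         + Xinv x0 (B x0 (sigma1 *m C x0 (Xinv x0 u'))) = 0) ->
     forall x : R,
     (forall u', D u' -> Az (Xinv x u') + Xinv x (A u')
                         + Xinv x (B x (sigma1 *m C x (Xinv x u'))) = 0)).
Proof.
move=> _ [T [CT GT]] _ _ _ s1u _ _ Bb Cb Xb Breg dB dC dX XD.
have part1 : forall x0 : R,
     (forall u, D u -> A (X x0 u) + X x0 (Az u) + B x0 (sigma1 *m C x0 u) = 0) ->
     forall x : R,
     (forall u, D u -> A (X x u) + X x (Az u) + B x (sigma1 *m C x u) = 0).
  move=> x0 H0 x u Du.
  pose f t := X t u.
  pose g t := - (X t (Az u) + B t (sigma1 *m C t u)).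
  pose f' t := B t (sigma2 *m C t u).
  pose g' t := A (f' t).
  have df : forall t, vderiv f (f' t) t.
    by move=> t; exact: (@vderiv_op R _ _ X _ t u (dX t)).
  have dg : forall t, vderiv g (g' t) t.
    move=> t.
    have [C' [dCt C'E]] := dC t.
    have dc := vderiv_mx sigma1 (@vderiv_op R _ _ C _ t u dCt).
    have := vderivN (vderivD (@vderiv_op R _ _ X _ t (Az u) (dX t))
               (vderiv_prod (dB t) (Bb t) dc)).
    have lB := (Bb t).1.
    rewrite C'E // mulKmx // mulKVmx // (linD lB) (linN lB) idG.
    exact.
  have H0' : A (f x0) = g x0.
    by apply/eqP; rewrite /f /g -addr_eq0 addrA H0.
  have := @graph_transport R K T D A CT GT f g f' g' (fun t => XD t u Du)
    (fun t => Breg t (C t u)) (fun t => erefl) df dg x0 x H0'.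
  by rewrite /f /g => ->; rewrite -addrA addNr.
split; first exact: part1.
move=> Xinv cXinv XXi XiX DXi x0 H0 x.
have lX : forall t, linear (X t) by move=> t; case: (Xb t).
have lXi : forall t u v, Xinv t (u + v) = Xinv t u + Xinv t v.
  move=> t u v.
  by rewrite -{1}(XXi t u) -{1}(XXi t v) -(linD (lX t)) XiX.
have lXi0 : forall t, Xinv t 0 = 0.
  by move=> t; rewrite -{1}(lin0 (lX t)) XiX.
have E1 : forall u, D u -> A (X x0 u) + X x0 (Az u) + B x0 (sigma1 *m C x0 u) = 0.
  move=> w Dw.
  have := H0 (X x0 w) (XD x0 w Dw); rewrite !XiX => /(congr1 (X x0)).
  rewrite !(linD (lX x0)) !XXi (lin0 (lX x0)).
  by rewrite [A _ + _]addrC.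
have E2 := part1 x0 E1 x.
move=> u Du.
have := E2 (Xinv x u) (DXi x u Du); rewrite XXi => /(congr1 (Xinv x)).
rewrite !lXi XiX lXi0.
by rewrite [Xinv x (A u) + _]addrC.
Qed.
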